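(* Let $k\ge 1$ and let $H_{2^k}$ be the Sylvester–Hadamard matrix of order $2^k$, with rows and columns indexed by $0,1,\ldots,2^k-1$; denote its $r$-th row by $H_{2^k}^{(r)}$. For an integer $j=\sum_{i=0}^{k-1}j_i2^i$ with $j_i\in\{0,1\}$ and $0\le j\le 2^k-1$, put $z_j=(j_0,j_1,\ldots,j_{k-1})\in\mathbb{F}_2^k$. Let $W=(w_0,w_1,\ldots,w_{2^k-1})$ with $w_i\in\{1,-1\}$ for all $i$. Then $W=\pm H_{2^k}^{(r)}$ for some $r\in\{0,\ldots,2^k-1\}$ if and only if for any four distinct integers $j,c,l,v\in\{0,\ldots,2^k-1\}$ with $z_j\oplus z_c\oplus z_l\oplus z_v=\mathbf{0}$ we have $w_jw_c=w_lw_v$.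
   Context: The Sylvester–Hadamard matrix is defined recursively by $H_1=(1)$, $H_2=\begin{pmatrix}1&1\\1&-1\end{pmatrix}$ and $H_{2^k}=\begin{pmatrix}H_{2^{k-1}}&H_{2^{k-1}}\\H_{2^{k-1}}&-H_{2^{k-1}}\end{pmatrix}$. Equivalently, $H_{2^k}^{(r)}=((-1)^{z_0\cdot z_r},(-1)^{z_1\cdot z_r},\ldots,(-1)^{z_{2^k-1}\cdot z_r})$, where $\cdot$ is the dot product on $\mathbb{F}_2^k$. *)

(* Defs.v *)
From mathcomp Require Import all_boot all_order all_algebra.
Set Implicit Arguments. Unset Strict Implicit. Unset Printing Implicit Defensive.
Import GRing.Theory Num.Theory.
Local Open Scope ring_scope.

(* Entries of the Sylvester-Hadamard matrix H_{2^k}, following the recursive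
   definition H_{2^(k+1)} = [[H, H], [H, -H]] with H = H_{2^k}, H_1 = (1). *)
Fixpoint sh_entry (k r c : nat) : int :=
  match k with
  | 0 => 1
  | k'.+1 =>
      let s := if ((2 ^ k' <= r) && (2 ^ k' <= c))%N then -1 else 1 in
      s * sh_entry k' (r %% 2 ^ k') (c %% 2 ^ k')
  end.

Definition sylvester_hadamard (k : nat) : 'M[int]_(2 ^ k) :=
  \matrix_(r < 2 ^ k, c < 2 ^ k) sh_entry k r c.

Definition zvec (k : nat) (j : nat) : 'rV['F_2]_k :=
  \row_(i < k) ((odd (j %/ 2 ^ i))%:R : 'F_2).

(* Main.v *)
Require Import Defs.
From mathcomp Require Import all_boot all_order all_algebra.
From mathcomp Require Import ring.
Import GRing.Theory Num.Theory.
Local Open Scope ring_scope.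

Lemma bit_mod (r k i : nat) : (i < k)%N -> odd ((r %% 2 ^ k) %/ 2 ^ i) = odd (r %/ 2 ^ i).
Proof.
move=> ik.
rewrite {2}(divn_eq r (2 ^ k)).
have -> : (2 ^ k = 2 ^ (k - i) * 2 ^ i)%N by rewrite -expnD subnK // ltnW.
rewrite mulnA divnMDl ?expn_gt0 // oddD oddM oddX.
have -> : (k - i = (k - i).-1.+1)%N by rewrite prednK // subn_gt0.
by rewrite /= andbF.
Qed.

Lemma bit_top (r k : nat) : (r < 2 ^ k.+1)%N -> (r %/ 2 ^ k = nat_of_bool (2 ^ k <= r))%N.
Proof.
move=> hr.
have h2 : (r %/ 2 ^ k < 2)%N.
  by rewrite ltn_divLR ?expn_gt0 //; rewrite -expnS.
case: leqP => h /=.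
  apply/eqP; rewrite eqn_leq -ltnS h2 /= leq_divRL ?expn_gt0 // mul1n //.
by rewrite divn_small.
Qed.

Lemma bits_inj (k j c : nat) : (j < 2 ^ k)%N -> (c < 2 ^ k)%N ->
  (forall i, (i < k)%N -> odd (j %/ 2 ^ i) = odd (c %/ 2 ^ i)) -> j = c.
Proof.
elim: k j c => [|k IH] j c.
  by rewrite expn0 !ltnS !leqn0 => /eqP -> /eqP ->.
move=> hj hc hb.
rewrite (divn_eq j 2) (divn_eq c 2) !modn2.
have h0 := hb 0%N isT; rewrite !expn0 !divn1 in h0.
rewrite h0; congr (_ * _ + _)%N.
apply: IH.
- by rewrite ltn_divLR // -expnSr.
- by rewrite ltn_divLR // -expnSr.
move=> i ik; have := hb i.+1 ik.
by rewrite expnS -!divnMA.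
Qed.

Definition bitF (n i : nat) : 'F_2 := (odd (n %/ 2 ^ i))%:R.
Definition sgnF (x : 'F_2) : int := if x == 0 then 1 else -1.

Lemma F2cases (x : 'F_2) : x = 0 \/ x = 1.
Proof. case: x => [[|[|m]]] //= Hm. by left; apply/val_inj. by right; apply/val_inj. Qed.

Lemma F2_11 : (1 + 1 : 'F_2) = 0. Proof. by apply/val_inj. Qed.

Lemma sgnF_add x y : sgnF (x + y) = sgnF x * sgnF y.
Proof.
by case: (F2cases x) => ->; case: (F2cases y) => ->; rewrite /sgnF ?F2_11 ?addr0 ?add0r /=.
Qed.

Lemma sgnF0 : sgnF 0 = 1. Proof. by []. Qed.

Lemma sgnF_sq x : sgnF x * sgnF x = 1.
Proof. by rewrite /sgnF; case: (x == 0); rewrite ?mulr1 ?mulrNN ?mulr1. Qed.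

Lemma H_dot k r c : (r < 2 ^ k)%N -> (c < 2 ^ k)%N ->
  sh_entry k r c = sgnF (\sum_(i < k) bitF r i * bitF c i).
Proof.
elim: k r c => [|k IH] r c hr hc; first by rewrite big_ord0.
rewrite /= big_ord_recr /= sgnF_add IH ?ltn_pmod ?expn_gt0 //.
rewrite mulrC; congr (_ * _).
  apply: congr1; apply: eq_bigr => i _.
  by rewrite /bitF !bit_mod.
by rewrite /bitF !bit_top //; case: (2 ^ k <= r)%N; case: (2 ^ k <= c)%N.
Qed.

Definition dotF {k} (a x : 'rV['F_2]_k) : 'F_2 := \sum_(i < k) a 0 i * x 0 i.

Lemma dotF_add k (a x y : 'rV['F_2]_k) : dotF a (x + y) = dotF a x + dotF a y.
Proof. by rewrite /dotF -big_split; apply: eq_bigr => i _; rewrite mxE mulrDr. Qed.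

Lemma dotF0 k (a : 'rV['F_2]_k) : dotF a 0 = 0.
Proof. by rewrite /dotF big1 // => i _; rewrite mxE mulr0. Qed.

Lemma zvecE k j i : zvec k j 0 i = bitF j i.
Proof. by rewrite /zvec mxE. Qed.

Lemma SH_dot k (r c : 'I_(2 ^ k)) :
  sylvester_hadamard k r c = sgnF (dotF (zvec k r) (zvec k c)).
Proof.
rewrite /sylvester_hadamard mxE H_dot //.
by congr sgnF; apply: eq_bigr => i _; rewrite !zvecE.
Qed.

Lemma bitF_inj (b b' : bool) : (b%:R : 'F_2) = b'%:R -> b = b'.
Proof. by case: b; case: b' => // /(congr1 val). Qed.

Lemma zvec_inj k : injective (fun j : 'I_(2 ^ k) => zvec k j).
Proof.
move=> j c /= h; apply/val_inj; apply: (@bits_inj k); [exact: ltn_ord|exact: ltn_ord|move=> i ik].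
have := congr1 (fun m : 'rV['F_2]_k => m 0 (Ordinal ik)) h.
by rewrite /= !zvecE /bitF => /bitF_inj.
Qed.

Lemma zvec_bij k : bijective (fun j : 'I_(2 ^ k) => zvec k j).
Proof.
apply: inj_card_bij; first exact: zvec_inj.
by rewrite card_mx card_ord mul1n card_ord.
Qed.

Lemma zvec0 k : zvec k 0 = 0.
Proof. by apply/rowP => i; rewrite zvecE mxE /bitF div0n. Qed.

Lemma xx0 k (x : 'rV['F_2]_k) : x + x = 0.
Proof. by apply/rowP => i; rewrite !mxE; case: (F2cases (x 0 i)) => ->; rewrite ?addr0 ?F2_11. Qed.

Lemma pm1sq (w : int) : w = 1 \/ w = -1 -> w * w = 1.
Proof. by case=> ->; rewrite ?mulr1 ?mulrNN ?mulr1. Qed.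

Theorem lemma1 (k : nat) (hk : (1 <= k)%N) (W : 'I_(2 ^ k) -> int)
  (hW : forall i, W i = 1 \/ W i = -1) :
  (exists r : 'I_(2 ^ k),
      (forall i, W i = sylvester_hadamard k r i) \/
      (forall i, W i = - sylvester_hadamard k r i)) <->
  (forall j c l v : 'I_(2 ^ k), uniq [:: j; c; l; v] ->
      zvec k j + zvec k c + zvec k l + zvec k v = 0 ->
      W j * W c = W l * W v).
Proof.
have hW1 i : W i * W i = 1 by exact: pm1sq.
split.
  move=> [r hr].
  have [eps [he hWe]] : exists eps : int, eps * eps = 1 /\
      forall i, W i = eps * sgnF (dotF (zvec k r) (zvec k i)).
    case: hr => hr; [exists 1 | exists (-1)]; split; rewrite ?mulr1 ?mulrNN ?mulr1 //;
      by move=> i; rewrite hr SH_dot ?mul1r ?mulN1r.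
  move=> j c l v _ hs.
  have P : W j * W c * (W l * W v) = 1.
    rewrite !hWe.
    transitivity ((eps * eps) * (eps * eps) * sgnF (dotF (zvec k r)
       (zvec k j + zvec k c + zvec k l + zvec k v))).
      by rewrite !dotF_add !sgnF_add; ring.
    by rewrite hs dotF0 he !mulr1.
  have := congr1 (fun t => t * (W l * W v)) P.
  have sq : (W l * W v) * (W l * W v) = 1 by rewrite mulrACA !hW1 mulr1.
  by rewrite /= mul1r -(mulrA (W j * W c)) sq mulr1.
move=> H.
have [ginv gK ginvK] := zvec_bij k.
have n0gt : (0 < 2 ^ k)%N by rewrite expn_gt0.
pose n0 : 'I_(2 ^ k) := Ordinal n0gt.
have n0E : n0 = ginv 0 by rewrite -(zvec0 k) -[in LHS](gK n0).
pose e := W n0.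
pose f x := e * W (ginv x).
have f0 : f 0 = 1 by rewrite /f -n0E hW1.
have fsq x : f x * f x = 1.
  by rewrite /f mulrACA hW1 hW1 mulr1.
have fadd : forall x y, f (x + y) = f x * f y.
  move=> x y.
  have [->|x0] := eqVneq x 0; first by rewrite add0r f0 mul1r.
  have [->|y0] := eqVneq y 0; first by rewrite addr0 f0 mulr1.
  have [<-|xy] := eqVneq x y; first by rewrite xx0 f0 fsq.
  have := H n0 (ginv (x + y)) (ginv x) (ginv y).
  rewrite n0E /= !inE !(can_eq ginvK) !ginvK add0r -addrA xx0.
  have xyx : (x + y == x) = false.
    by apply/negbTE; apply: contra y0 => /eqP h; rewrite -(addKr x y) h addNr.
  have xyy : (x + y == y) = false.
    by apply/negbTE; apply: contra x0 => /eqP h; rewrite -(addrK y x) h subrr.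
  have xy0 : (0 == x + y) = false.
    apply/negbTE; apply: contra xy => /eqP h.
    by rewrite -[y]add0r h -addrA xx0 addr0.
  rewrite xyx xyy xy0 !(eq_sym 0) (negbTE x0) (negbTE y0) xy => /(_ isT erefl) h.
  by rewrite /f /e n0E h mulrACA hW1 mul1r.
pose a : 'rV['F_2]_k := \row_i (if f 'e_i == 1 then 0 else 1).
have fE x : f x = sgnF (dotF a x).
  rewrite {1}(row_sum_delta x) (big_morph f fadd f0) /dotF.
  rewrite (big_morph sgnF sgnF_add sgnF0); apply: eq_bigr => i _.
  rewrite mxE; case: (F2cases (x 0 i)) => ->.
    by rewrite scale0r f0 mulr0.
  rewrite scale1r mulr1 /sgnF.
  have : f 'e_i = 1 \/ f 'e_i = -1.
    by rewrite /f /e; case: (hW n0) => ->; case: (hW (ginv 'e_i)) => ->;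
      rewrite ?mulr1 ?mulrNN ?mul1r ?mulN1r; auto.
  by case=> ->; rewrite ?eqxx //.
exists (ginv a).
have key i : W i = e * sylvester_hadamard k (ginv a) i.
  rewrite SH_dot ginvK -fE /f gK mulrA hW1 mul1r //.
case: (hW n0) => he; [left|right] => i; rewrite key /e he ?mul1r ?mulN1r //.
Qed.
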